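(* If $\mathcal{F}=\{f_i\}_{i=1}^N$ is an exact phase-retrievable frame for $\mathbb{R}^n$, then $2n-1\le N\le n(n+1)/2$.
   Context: A frame for $\mathbb{R}^n$ is a finite spanning sequence. It is phase-retrievable if $|\langle x,f_i\rangle|=|\langle y,f_i\rangle|$ for all $i$ implies $x=\pm y$. Let $\mathcal{S}_2$ be the set of real symmetric $n\times n$ matrices of rank at most $2$; for $\Lambda\subseteq\{1,\dots,N\}$ put $\Theta_{L(\mathcal{F}_\Lambda)}(A)=(f_i^TAf_i)_{i\in\Lambda}$. $\mathcal{F}$ has the exact PR-redundancy property if $\ker(\Theta_{L(\mathcal{F}_\Lambda)})\cap\mathcal{S}_2\neq\ker(\Theta_{L(\mathcal{F})})\cap\mathcal{S}_2$ for every proper subset $\Lambda$. An exact phase-retrievable frame is a phase-retrievable frame with the exact PR-redundancy property. *)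

(* Defs.v *)
From HB Require Import structures.
From mathcomp Require Import all_boot all_order all_algebra.
From mathcomp Require Import reals.
Set Implicit Arguments. Unset Strict Implicit. Unset Printing Implicit Defensive.
Import Order.TTheory GRing.Theory Num.Theory.
Local Open Scope ring_scope.

Definition inner (R : realType) (n : nat) (x y : 'rV[R]_n) : R := (x *m y^T) 0 0.

Definition frame_mx (R : realType) (n N : nat) (f : 'I_N -> 'rV[R]_n) : 'M[R]_(N, n) :=
  \matrix_(i < N, j < n) f i 0 j.

Definition is_frame (R : realType) (n N : nat) (f : 'I_N -> 'rV[R]_n) : bool :=
  row_full (frame_mx f).

Definition phase_retrievable (R : realType) (n N : nat) (f : 'I_N -> 'rV[R]_n) : Prop :=
  forall x y : 'rV[R]_n,
    (forall i, `|inner x (f i)| = `|inner y (f i)|) -> x = y \/ x = - y.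

Definition S2 (R : realType) (n : nat) (A : 'M[R]_n) : Prop :=
  A^T = A /\ (\rank A <= 2)%N.

Definition Theta (R : realType) (n N : nat) (f : 'I_N -> 'rV[R]_n)
    (Lam : {set 'I_N}) (A : 'M[R]_n) : {ffun {i : 'I_N | i \in Lam} -> R} :=
  [ffun i => (f (sval i) *m A *m (f (sval i))^T) 0 0].

Definition kerS2 (R : realType) (n N : nat) (f : 'I_N -> 'rV[R]_n)
    (Lam : {set 'I_N}) (A : 'M[R]_n) : Prop :=
  Theta f Lam A = 0 /\ S2 A.

Definition exact_PR_redundancy (R : realType) (n N : nat) (f : 'I_N -> 'rV[R]_n) : Prop :=
  forall Lam : {set 'I_N}, Lam \proper [set: 'I_N] ->
    ~ (forall A : 'M[R]_n, kerS2 f Lam A <-> kerS2 f [set: 'I_N] A).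

Definition exact_PR_frame (R : realType) (n N : nat) (f : 'I_N -> 'rV[R]_n) : Prop :=
  is_frame f /\ phase_retrievable f /\ exact_PR_redundancy f.

(* Main.v *)
Require Import Defs.
From mathcomp Require Import all_boot all_order all_algebra.
From mathcomp Require Import reals.
From mathcomp Require Import zify ring lra.
From Stdlib Require Import Classical.
Set Implicit Arguments. Unset Strict Implicit. Unset Printing Implicit Defensive.
Import Order.TTheory GRing.Theory Num.Theory.
Local Open Scope ring_scope.

Lemma exists_ker (F : fieldType) m p (G : 'M[F]_(m,p)) :
  (\rank G < m)%N -> exists u : 'rV_m, u != 0 /\ u *m G = 0.
Proof.
move=> H.
have Hk : kermx G != 0.
  by rewrite -mxrank_eq0 mxrank_ker subn_eq0 -ltnNge.
case: (pickP (fun i => row i (kermx G) != 0)) => [i Hi | H0].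
  exists (row i (kermx G)); split => //; apply/sub_kermxP; exact: row_sub.
move/eqP: Hk; case; apply/row_matrixP => i; rewrite row0.
by move: (H0 i) => /= /negbFE /eqP.
Qed.

Lemma sum_lt_min n m : (\sum_(j < n) ((j < m)%N : nat) = minn n m)%N.
Proof.
elim: n => [|n IH]; first by rewrite big_ord0 min0n.
rewrite big_ord_recr /= IH.
case: (ltnP n m) => H /=; lia.
Qed.

Lemma card_tri n : (#|[pred p : 'I_n * 'I_n | (p.1 <= p.2)%N]| = n * (n + 1) %/ 2)%N.
Proof.
rewrite -sum1_card big_mkcond /=.
rewrite -(pair_bigA _ (fun (j k : 'I_n) => if (j <= k)%N then 1%N else 0%N)) /=.
rewrite exchange_big /=.
transitivity (\sum_(k < n) k.+1)%N.
  apply: eq_bigr => k _.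
  have Hm : minn n k.+1 = k.+1 by apply/minn_idPr; exact: ltn_ord.
  rewrite -[in RHS]Hm.
  rewrite -sum_lt_min; apply: eq_bigr => j _; by rewrite ltnS; case: (j <= k)%N.
have -> : (\sum_(k < n) k.+1 = \sum_(k < n.+1) k)%N by rewrite big_ord_recl /=.
rewrite -(big_mkord xpredT (fun k => k)) bin2_sum bin2 -divn2 /=.
by rewrite mulnC addn1.
Qed.

Lemma self_opp (R : numFieldType) m n (v : 'M[R]_(m,n)) : v = - v -> v = 0.
Proof.
move=> H.
have H2 : (2%:R : R) *: v = 0 by rewrite scaler_nat mulr2n {1}H addNr.
have h2 : (2%:R : R) != 0 by rewrite pnatr_eq0.
by rewrite -[v]scale1r -(mulVf h2) -scalerA H2 scaler0.
Qed.

Lemma inner_sum (R : realType) n (u w : 'rV[R]_n) :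
  inner u w = \sum_j u 0 j * w 0 j.
Proof. by rewrite /inner mxE; apply: eq_bigr => j _; rewrite mxE. Qed.

Lemma lower (R : realType) n N (f : 'I_N -> 'rV[R]_n) :
  phase_retrievable f -> (2 * n - 1 <= N)%N.
Proof.
case: n f => [|n] f PR; first by [].
rewrite leqNgt; apply/negP => HN.
pose g (k : nat) : 'rV[R]_n.+1 := if insub k is Some i then f i else 0.
have Hg : forall i : 'I_N, g (val i) = f i by move=> i; rewrite /g valK.
pose G1 : 'M[R]_(n.+1, n) := \matrix_(j, k) g k 0 j.
pose G2 : 'M[R]_(n.+1, n) := \matrix_(j, k) g (nat_of_ord k + n)%N 0 j.
have h1 : (\rank G1 < n.+1)%N by rewrite ltnS rank_leq_col.
have [u [unz uG]] := exists_ker h1.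
have h2 : (\rank G2 < n.+1)%N by rewrite ltnS rank_leq_col.
have [v [vnz vG]] := exists_ker h2.
have key : forall i : 'I_N, inner u (f i) = 0 \/ inner v (f i) = 0.
  move=> i; case: (ltnP i n) => Hi.
    left; have := congr1 (fun M : 'M[R]_(1,n) => M 0 (Ordinal Hi)) uG.
    rewrite !mxE inner_sum => E; apply: etrans E; apply: eq_bigr => j _.
    by rewrite mxE /= Hg.
  right; have Hi' : (i - n < n)%N by have := ltn_ord i; lia.
  have := congr1 (fun M : 'M[R]_(1,n) => M 0 (Ordinal Hi')) vG.
  rewrite !mxE inner_sum => E; apply: etrans E; apply: eq_bigr => j _.
  by rewrite mxE /= subnK // Hg.
have := PR (u + v) (u - v).
have Hlin : forall a b w : 'rV[R]_n.+1, inner (a + b) w = inner a w + inner b w.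
  by move=> a b w; rewrite /inner mulmxDl mxE.
have Hlin' : forall a b w : 'rV[R]_n.+1, inner (a - b) w = inner a w - inner b w.
  by move=> a b w; rewrite /inner mulmxBl !mxE.
case.
  move=> i; rewrite Hlin Hlin'; case: (key i) => ->.
    by rewrite !add0r normrN.
  by rewrite !addr0 subr0.
  move/addrI => /self_opp H; by rewrite H eqxx in vnz.
rewrite opprB addrC => /addrI /self_opp H; by rewrite H eqxx in unz.
Qed.

Definition phi (R : realType) n N (f : 'I_N -> 'rV[R]_n) j (A : 'M[R]_n) : R :=
  (f j *m A *m (f j)^T) 0 0.

Lemma Theta_app (R : realType) n N (f : 'I_N -> 'rV[R]_n) (Lam : {set 'I_N}) A j (Hj : j \in Lam) :
  Theta f Lam A (exist _ j Hj) = phi f j A.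
Proof. by rewrite /Theta ffunE. Qed.

Lemma Theta0 (R : realType) n N (f : 'I_N -> 'rV[R]_n) (Lam : {set 'I_N}) A :
  Theta f Lam A = 0 <-> forall j, j \in Lam -> phi f j A = 0.
Proof.
split.
  move=> H j Hj; rewrite -(Theta_app f A Hj) H; by rewrite ffunE.
move=> H; apply/ffunP => -[j Hj]; rewrite Theta_app H // ffunE; reflexivity.
Qed.

Lemma exA (R : realType) n N (f : 'I_N -> 'rV[R]_n) :
  exact_PR_redundancy f -> forall i : 'I_N, exists A : 'M[R]_n,
   [/\ A^T = A, forall j, j != i -> phi f j A = 0 & phi f i A != 0].
Proof.
move=> EX i.
have Hp : [set~ i] \proper [set: 'I_N].
  rewrite properT; apply/eqP => H; have := in_setT i; by rewrite -H !inE eqxx.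
have [A HA] := not_all_ex_not _ _ (EX _ Hp).
have T2L : kerS2 f [set: 'I_N] A -> kerS2 f [set~ i] A.
  case=> HT HS; split => //; apply/Theta0 => j _; move/Theta0: HT; apply; exact: in_setT.
case: (classic (kerS2 f [set~ i] A)) => HL; last first.
  by case: HA; split => // /T2L.
have HnT : ~ kerS2 f [set: 'I_N] A by move=> HT; apply: HA; split.
case: HL => [HL HS]; exists A; split => //; first exact: HS.1.
  by move=> j Hj; move/Theta0: HL; apply; rewrite !inE.
apply/eqP => Hi; apply: HnT; split => //; apply/Theta0 => j _.
case: (eqVneq j i) => [-> //|Hj]; move/Theta0: HL; apply; by rewrite !inE.
Qed.

Lemma phi_lin (R : realType) n N (f : 'I_N -> 'rV[R]_n) j (c : 'I_N -> R) (A : 'I_N -> 'M[R]_n) :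
  phi f j (\sum_i c i *: A i) = \sum_i c i * phi f j (A i).
Proof.
rewrite /phi mulmx_sumr mulmx_suml summxE; apply: eq_bigr => i _.
by rewrite -scalemxAr -scalemxAl mxE.
Qed.

Lemma upper (R : realType) n N (f : 'I_N -> 'rV[R]_n) :
  exact_PR_redundancy f -> (N <= n * (n + 1) %/ 2)%N.
Proof.
move=> EX.
have [A HA] := fin_all_exists (exA EX).
pose S := [pred p : 'I_n * 'I_n | (p.1 <= p.2)%N].
pose M : 'M[R]_(N, #|S|) := \matrix_(i, s) A i (enum_val s).1 (enum_val s).2.
rewrite -card_tri leqNgt; apply/negP => Hlt.
have Hr : (\rank M < N)%N by apply: leq_ltn_trans (rank_leq_col M) Hlt.
have [c [cnz cM]] := exists_ker Hr.
pose B := \sum_i c 0 i *: A i.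
have HB : forall a b : 'I_n, B a b = \sum_i c 0 i * A i a b.
  by move=> a b; rewrite summxE; apply: eq_bigr => i _; rewrite mxE.
have HS : forall a b : 'I_n, (a <= b)%N -> B a b = 0.
  move=> a b Hab.
  have Hp : (a, b) \in S by [].
  have := congr1 (fun X : 'M[R]_(1, #|S|) => X 0 (enum_rank_in Hp (a, b))) cM.
  rewrite !mxE HB => E; apply: etrans E; apply: eq_bigr => i _.
  by rewrite mxE enum_rankK_in.
have B0 : B = 0.
  apply/matrixP => a b; rewrite mxE.
  case: (leqP a b) => Hab; first exact: HS.
  have := HS b a (ltnW Hab); rewrite !HB => E; apply: etrans E; apply: eq_bigr => i _.
  by case: (HA i) => HT _ _; rewrite -[in LHS]HT mxE.
apply/negP: cnz; rewrite negbK; apply/eqP/rowP => j; rewrite mxE.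
have := phi_lin f j (fun i => c 0 i) A.
rewrite -/B B0 /phi mulmx0 mul0mx mxE (bigD1 j) //= big1 ?addr0.
  case: (HA j) => _ _ Hj; move/esym/eqP; rewrite mulf_eq0 (negbTE Hj) orbF.
  by move/eqP.
move=> i Hij; case: (HA i) => _ Hi _; by rewrite -/(phi f j (A i)) Hi ?mulr0 // eq_sym.
Qed.

Theorem corollary1p6 (R : realType) (n N : nat) (f : 'I_N -> 'rV[R]_n) :
  exact_PR_frame f -> (2 * n - 1 <= N)%N /\ (N <= n * (n + 1) %/ 2)%N.
Proof.
case=> _ [PR EX]; split; [exact: lower PR | exact: upper EX].
Qed.
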